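(* Let $n\geq1$. The assignment $\rho_i\mapsto\sigma_1\sigma_2\cdots\sigma_i$ ($1\leq i\leq n$) extends to a group isomorphism from the group with presentation $$\langle\rho_1,\dots,\rho_n\mid\rho_1\rho_j\rho_i=\rho_{i+1}\rho_j\ \text{for } 1\leq i<j\leq n\rangle$$ onto the braid group $\mathcal{B}_{n+1}$; its inverse sends $\sigma_i\mapsto\rho_{i-1}^{-1}\rho_i$ (with $\rho_0=1$). Under this isomorphism, the image of the monoid $\mathcal{H}_n^+$ with the same presentation is the submonoid $\Sigma_n$ of $\mathcal{B}_{n+1}$.
   Context: $\mathcal{B}_{n+1}$ is the braid group with generators $\sigma_1,\dots,\sigma_n$ and relations $\sigma_i\sigma_{i+1}\sigma_i=\sigma_{i+1}\sigma_i\sigma_{i+1}$ ($1\leq i<n$), $\sigma_i\sigma_j=\sigma_j\sigma_i$ ($|i-j|>1$). $\mathcal{H}_n^+$ is the monoid with generators $\rho_1,\dots,\rho_n$ and relations $\rho_1\rho_j\rho_i=\rho_{i+1}\rho_j$ for $1\leq i<j\leq n$. $\Sigma_n$ is the submonoid of $\mathcal{B}_{n+1}$ generated by $\sigma_1,\ \sigma_1\sigma_2,\ \dots,\ \sigma_1\sigma_2\cdots\sigma_n$. *)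

(* Defs.v *)
From mathcomp Require Import all_boot.
Set Implicit Arguments. Unset Strict Implicit. Unset Printing Implicit Defensive.

(* A letter (i, b) is the generator x_i if b = false and x_i^{-1} if b = true. *)
Definition letter := (nat * bool)%type.
Definition word := seq letter.

Definition inv_letter (x : letter) : letter := (x.1, ~~ x.2).
Definition inv_word (w : word) : word := rev (map inv_letter w).

Definition word_on (n : nat) (w : word) : bool :=
  all (fun x : letter => (0 < x.1 <= n)%N) w.

Definition pos_word_on (n : nat) (w : word) : bool :=
  word_on n w && all (fun x : letter => ~~ x.2) w.

(* Equality in the group presented by the relations R (pairs l = r):
   the congruence on words generated by free cancellation and the relations. *)
Inductive pres_eq (R : seq (word * word)) : word -> word -> Prop :=
| geq_refl w : pres_eq R w w
| geq_sym u v : pres_eq R u v -> pres_eq R v u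
| geq_trans u v w : pres_eq R u v -> pres_eq R v w -> pres_eq R u w
| geq_free u v x : pres_eq R (u ++ x :: inv_letter x :: v) (u ++ v)
| geq_rel u v l r : (l, r) \in R -> pres_eq R (u ++ l ++ v) (u ++ r ++ v).


Definition gen (i : nat) : letter := (i, false).

(* Braid group B_{n+1}: generators sigma_1..sigma_n *)
Definition braid_rels (n : nat) : seq (word * word) :=
  [seq ([:: gen i; gen i.+1; gen i], [:: gen i.+1; gen i; gen i.+1]) | i <- iota 1 n.-1]
  ++ [seq ([:: gen ij.1; gen ij.2], [:: gen ij.2; gen ij.1])
     | ij <- [seq (i, j) | i <- iota 1 n, j <- iota 1 n]
     & (ij.1.+1 < ij.2)%N || (ij.2.+1 < ij.1)%N].

Definition H_rels (n : nat) : seq (word * word) :=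
  [seq ([:: gen 1; gen ij.2; gen ij.1], [:: gen ij.1.+1; gen ij.2])
  | ij <- [seq (i, j) | j <- iota 1 n, i <- iota 1 j.-1]].

Definition subst (f : nat -> word) (w : word) : word :=
  flatten [seq (if x.2 then inv_word (f x.1) else f x.1) | x <- w].

Definition phi (i : nat) : word := [seq gen k | k <- iota 1 i].

(* sigma_i |-> rho_{i-1}^{-1} rho_i, with rho_0 = 1 *)
Definition psi (i : nat) : word :=
  if (i <= 1)%N then [:: gen i] else [:: (i.-1, true); gen i].

Definition in_Sigma (n : nat) (w : word) : Prop :=
  exists s : seq nat, all (fun i => 0 < i <= n)%N s /\
                      pres_eq (braid_rels n) w (flatten [seq phi i | i <- s]).

Definition in_image_H (n : nat) (w : word) : Prop :=
  exists p : word, pos_word_on n p /\ pres_eq (braid_rels n) w (subst phi p).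

(* Main.v *)
From Stdlib Require Import Setoid Morphisms.
Require Import Defs.
From mathcomp Require Import all_boot.
Set Implicit Arguments. Unset Strict Implicit. Unset Printing Implicit Defensive.

Section Gen.
Variable R : seq (word * word).
Local Notation "u ≡ v" := (pres_eq R u v) (at level 70).

Lemma pe_catl a u v : u ≡ v -> a ++ u ≡ a ++ v.
Proof.
elim=> {u v}.
- by move=> w; apply: geq_refl.
- by move=> u v _ H; apply: geq_sym.
- by move=> u v w _ H1 _ H2; apply: geq_trans H2.
- by move=> u v x; rewrite !catA; apply: geq_free.
- by move=> u v l r H; rewrite !catA -(catA _ l) -(catA _ r); apply: geq_rel.
Qed.

Lemma pe_catr b u v : u ≡ v -> u ++ b ≡ v ++ b.
Proof.
elim=> {u v}.
- by move=> w; apply: geq_refl.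
- by move=> u v _ H; apply: geq_sym.
- by move=> u v w _ H1 _ H2; apply: geq_trans H2.
- by move=> u v x; rewrite -!catA; apply: geq_free.
- by move=> u v l r H; rewrite -!catA; apply: geq_rel.
Qed.

Global Instance pe_equiv : Equivalence (pres_eq R).
Proof. split; [exact: geq_refl | exact: geq_sym | exact: geq_trans]. Qed.

Global Instance pe_cat_proper : Proper (pres_eq R ==> pres_eq R ==> pres_eq R) cat.
Proof.
move=> a b Hab c d Hcd. apply: (@geq_trans R _ (b ++ c)); [exact: pe_catr | exact: pe_catl].
Qed.

Global Instance pe_cons_proper x : Proper (pres_eq R ==> pres_eq R) (cons x).
Proof. by move=> a b H; apply: (pe_catl [:: x] H). Qed.

Lemma inv_letterK : involutive inv_letter.
Proof. by case=> a b; rewrite /inv_letter /= negbK. Qed.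

Lemma canc x t : x :: inv_letter x :: t ≡ t.
Proof. exact: (geq_free R [::] t x). Qed.

Lemma canc' x t : inv_letter x :: x :: t ≡ t.
Proof. by have := canc (inv_letter x) t; rewrite inv_letterK. Qed.

Lemma cancG k t : gen k :: (k,true) :: t ≡ t.
Proof. exact: (canc (gen k)). Qed.
Lemma cancI k t : (k,true) :: gen k :: t ≡ t.
Proof. exact: (canc (k,true)). Qed.

Lemma inv_word_cons a w : inv_word (a :: w) = inv_word w ++ [:: inv_letter a].
Proof. by rewrite /inv_word /= rev_cons cats1. Qed.

Lemma inv_word_cat u v : inv_word (u ++ v) = inv_word v ++ inv_word u.
Proof. by rewrite /inv_word map_cat rev_cat. Qed.

Lemma inv_wordK : involutive inv_word.
Proof. by move=> w; rewrite /inv_word map_rev revK (mapK inv_letterK). Qed.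

Lemma cancel_w w t : w ++ inv_word w ++ t ≡ t.
Proof.
elim: w t => [|a w IH] t /=; first reflexivity.
rewrite inv_word_cons -catA /= IH; exact: canc.
Qed.

Lemma cancel_w' w t : inv_word w ++ w ++ t ≡ t.
Proof. by have := cancel_w (inv_word w) t; rewrite inv_wordK. Qed.

Lemma inv_from F a : (forall t, F ++ t ≡ a :: t) ->
  forall t, inv_word F ++ t ≡ inv_letter a :: t.
Proof.
move=> H t.
transitivity (inv_letter a :: a :: inv_word F ++ t); first by symmetry; apply: canc'.
rewrite -H cancel_w; reflexivity.
Qed.

Lemma conj_inv a P Q : (forall Y, a :: P ++ Y ≡ Q ++ a :: Y) ->
  forall X, inv_letter a :: Q ++ X ≡ P ++ inv_letter a :: X.
Proof.
move=> H X.
transitivity (inv_letter a :: a :: P ++ inv_letter a :: X); last exact: canc'.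
rewrite H canc; reflexivity.
Qed.

Lemma Tel m t : flatten [seq psi k | k <- iota 1 m.+1] ++ t ≡ gen m.+1 :: t.
Proof.
elim: m t => [|m IH] t; first reflexivity.
have -> : iota 1 m.+2 = iota 1 m.+1 ++ [:: m.+2].
  by have := iotaD 1 m.+1 1; rewrite addn1 add1n.
rewrite map_cat flatten_cat -catA IH.
rewrite /= cancG; reflexivity.
Qed.
End Gen.

#[global] Hint Resolve geq_refl : core.

Lemma subst_cat f u v : subst f (u ++ v) = subst f u ++ subst f v.
Proof. by rewrite /subst map_cat flatten_cat. Qed.

Lemma subst_cons f x u : subst f (x :: u) =
   (if x.2 then inv_word (f x.1) else f x.1) ++ subst f u.
Proof. by []. Qed.

Lemma subst_pres R1 R2 f :
  (forall l r, (l, r) \in R1 -> pres_eq R2 (subst f l) (subst f r)) ->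
  forall u v, pres_eq R1 u v -> pres_eq R2 (subst f u) (subst f v).
Proof.
move=> HR u v; elim=> {u v}.
- by [].
- by move=> u v _ H; symmetry.
- by move=> u v w _ H1 _ H2; rewrite H1.
- move=> u v [k b]; rewrite !subst_cat !subst_cons /inv_letter /=.
  case: b => /=; [rewrite cancel_w' | rewrite cancel_w]; reflexivity.
- move=> u v l r H; rewrite !subst_cat (HR _ _ H); reflexivity.
Qed.

Lemma subst_id R n f :
  (forall k, (0 < k <= n)%N -> forall t, pres_eq R (f k ++ t) (gen k :: t)) ->
  forall u, word_on n u -> pres_eq R (subst f u) u.
Proof.
move=> Hf u Hu; rewrite -[X in pres_eq _ _ X]cats0 -[subst f u]cats0.
elim: u Hu [::] => [|[k b] u IH] //= /andP[/= Hk Hu] t.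
rewrite subst_cons -catA (IH Hu) /=.
case: b => /=; last exact: Hf.
exact: (inv_from (Hf k Hk)).
Qed.

Lemma subst_inv g w : subst g (inv_word w) = inv_word (subst g w).
Proof.
elim: w => [|[k b] w IH] //.
rewrite inv_word_cons subst_cat IH subst_cons inv_word_cat; congr (_ ++ _).
by case: b; rewrite /subst /= cats0 ?inv_wordK.
Qed.

Lemma subst_subst g f u :
  subst g (subst f u) = subst (fun k => subst g (f k)) u.
Proof.
elim: u => [|[k b] u IH] //.
by rewrite subst_cons subst_cat IH subst_cons; case: b => //=; rewrite subst_inv.
Qed.

Lemma subst_gen g s : subst g (map gen s) = flatten (map g s).
Proof. by elim: s => //= a s IH; rewrite subst_cons IH. Qed.

From mathcomp Require Import zify.

Lemma map_succ_iota m i : map succn (iota m i) = iota m.+1 i.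
Proof. by elim: i m => //= i IH m; rewrite IH. Qed.

Section Braid.
Variable n : nat.
Local Notation "u ≡ v" := (pres_eq (braid_rels n) u v) (at level 70).

Lemma B_braid k t : (0 < k)%N -> (k.+1 <= n)%N ->
  gen k :: gen k.+1 :: gen k :: t ≡ gen k.+1 :: gen k :: gen k.+1 :: t.
Proof.
move=> H1 H2.
have Hm : ([:: gen k; gen k.+1; gen k], [:: gen k.+1; gen k; gen k.+1]) \in braid_rels n.
  rewrite mem_cat; apply/orP; left; apply/mapP; exists k => //.
  rewrite mem_iota; lia.
exact: (geq_rel [::] t Hm).
Qed.

Lemma B_comm i j t : (0 < i <= n)%N -> (0 < j <= n)%N -> (i.+1 < j)%N || (j.+1 < i)%N ->
  gen i :: gen j :: t ≡ gen j :: gen i :: t.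
Proof.
move=> H1 H2 H3.
have Hm : ([:: gen i; gen j], [:: gen j; gen i]) \in braid_rels n.
  rewrite mem_cat; apply/orP; right; apply/mapP; exists (i, j) => //.
  rewrite mem_filter /= H3 /=; apply: allpairs_f; rewrite mem_iota; lia.
exact: (geq_rel [::] t Hm).
Qed.

Lemma BC k ks t : (0 < k <= n)%N ->
  all (fun m => (0 < m <= n)%N && ((m.+1 < k)%N || (k.+1 < m)%N)) ks ->
  gen k :: map gen ks ++ t ≡ map gen ks ++ gen k :: t.
Proof.
move=> Hk; elim: ks => [|m ks IH] /=; first reflexivity.
move/andP=> [/andP[Hm Hmk] Hks].
rewrite B_comm //; last by rewrite orbC.
rewrite IH //; reflexivity.
Qed.

Lemma Shift k j t : (0 < k)%N -> (k < j)%N -> (j <= n)%N ->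
  map gen (iota 1 j) ++ gen k :: t ≡ gen k.+1 :: map gen (iota 1 j) ++ t.
Proof.
move=> Hk Hkj Hj.
set m := j - k.+1.
have -> : iota 1 j = iota 1 k.-1 ++ [:: k, k.+1 & iota k.+2 m].
  have Ej : j = k.-1 + m.+2 by rewrite /m; lia.
  rewrite {1}Ej iotaD /=.
  have -> : 1 + k.-1 = k by lia.
  by [].
rewrite map_cat -!catA /=.
rewrite -(@BC k (iota k.+2 m)); last first.
  apply/allP => x; rewrite mem_iota /m => Hx; lia.
  lia.
rewrite B_braid //; last lia.
rewrite -(@BC k.+1 (iota 1 k.-1)); last first.
  apply/allP => x; rewrite mem_iota => Hx; lia.
  lia.
reflexivity.
Qed.

Lemma ShiftL j ks t : (j <= n)%N -> all (fun m => (0 < m < j)%N) ks ->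
  map gen (iota 1 j) ++ map gen ks ++ t ≡ map gen (map succn ks) ++ map gen (iota 1 j) ++ t.
Proof.
move=> Hj; elim: ks => [|k ks IH] /=; first reflexivity.
move/andP=> [/andP[H1 H2] Hks].
rewrite Shift // IH //; reflexivity.
Qed.

Lemma phi_rel i j : (0 < i)%N -> (i < j)%N -> (j <= n)%N ->
  subst phi [:: gen 1; gen j; gen i] ≡ subst phi [:: gen i.+1; gen j].
Proof.
move=> Hi Hij Hj.
rewrite /subst /= /phi !cats0.
have H := @ShiftL j (iota 1 i) [::] Hj.
rewrite !cats0 map_succ_iota in H.
rewrite H; first reflexivity.
by apply/allP => x; rewrite mem_iota => Hx; lia.
Qed.
End Braid.

Section HH.
Variable n : nat.
Local Notation "u ≡ v" := (pres_eq (H_rels n) u v) (at level 70).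

Lemma Hrel i j t : (0 < i)%N -> (i < j)%N -> (j <= n)%N ->
  gen 1 :: gen j :: gen i :: t ≡ gen i.+1 :: gen j :: t.
Proof.
move=> H1 H2 H3.
have Hm : ([:: gen 1; gen j; gen i], [:: gen i.+1; gen j]) \in H_rels n.
  apply/mapP; exists (i, j) => //.
  apply/allpairsPdep; exists j, i; split => //; rewrite mem_iota; lia.
exact: (geq_rel [::] t Hm).
Qed.

Lemma T1 j t : (1 < j)%N -> (j <= n)%N ->
  gen j :: gen 1 :: t ≡ (1, true) :: gen 2 :: gen j :: t.
Proof.
move=> H1 H2.
transitivity ((1,true) :: gen 1 :: gen j :: gen 1 :: t); first by symmetry; apply: cancI.
rewrite (@Hrel 1 j) //; reflexivity.
Qed.

Lemma T2 m j t : (0 < m)%N -> (m.+1 < j)%N -> (j <= n)%N ->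
  gen j :: (m, true) :: gen m.+1 :: t ≡ (m.+1, true) :: gen m.+2 :: gen j :: t.
Proof.
move=> H1 H2 H3.
transitivity ((m.+1,true) :: gen m.+1 :: gen j :: (m,true) :: gen m.+1 :: t);
  first by symmetry; apply: cancI.
rewrite -(@Hrel m j ((m,true) :: gen m.+1 :: t)) //; last lia.
rewrite cancG (@Hrel m.+1 j) //; reflexivity.
Qed.

Lemma TT k j t : (0 < k)%N -> (k < j)%N -> (j <= n)%N ->
  gen j :: psi k ++ t ≡ psi k.+1 ++ gen j :: t.
Proof.
case: k => [//|[|m]] H1 H2 H3 /=; first exact: T1.
exact: T2.
Qed.

Lemma CS k j t : (0 < k)%N -> (k.+1 < j)%N -> (j <= n)%N ->
  psi j ++ psi k ++ t ≡ psi k ++ psi j ++ t.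
Proof.
case: j => [|[|[|l]]] H1 H2 H3 //; try lia.
have -> : psi l.+3 = [:: (l.+2, true); gen l.+3] by [].
rewrite /= (@TT k l.+3) //; last lia.
have := @conj_inv (H_rels n) (gen l.+2) (psi k) (psi k.+1).
move=> /(_ (fun Y => @TT k l.+2 Y H1 _ _)) H; apply: H; lia.
Qed.

Lemma CL j ks t : (j <= n)%N -> all (fun k => (0 < k)%N && (k.+1 < j)%N) ks ->
  flatten (map psi ks) ++ psi j ++ t ≡ psi j ++ flatten (map psi ks) ++ t.
Proof.
move=> Hj; elim: ks => [|k ks IH] /=; first reflexivity.
move/andP=> [/andP[H1 H2] Hks].
rewrite -!catA IH // -(@CS k j) //; reflexivity.
Qed.

Lemma Comm_rho m j t : (0 < m)%N -> (m.+1 < j)%N -> (j <= n)%N ->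
  gen m :: psi j ++ t ≡ psi j ++ gen m :: t.
Proof.
case: m => [//|m] H1 H2 H3.
have Hall : all (fun k => (0 < k)%N && (k.+1 < j)%N) (iota 1 m.+1).
  by apply/allP => x; rewrite mem_iota => Hx; lia.
rewrite -!(@Tel (H_rels n) m) (CL _ H3 Hall); reflexivity.
Qed.

Lemma BraidH i t : (0 < i)%N -> (i.+1 <= n)%N ->
  psi i ++ psi i.+1 ++ psi i ++ t ≡ psi i.+1 ++ psi i ++ psi i.+1 ++ t.
Proof.
case: i => [//|[|m]] H1 H2 /=.
  rewrite (cancG _ 1 (gen 2 :: gen 1 :: t)) (cancG _ 1 (gen 2 :: t)).
  exact: T1.
rewrite (cancG _ m.+2 (gen m.+3 :: (m.+1,true) :: gen m.+2 :: t)) (cancG _ m.+2 (gen m.+3 :: t)).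
rewrite (@T2 m.+1 m.+3) //.
have := @conj_inv (H_rels n) (gen m.+1) (psi m.+3) (psi m.+3).
move=> /(_ (fun Y => @Comm_rho m.+1 m.+3 Y _ _ H2)) H.
exact: (H isT (ltnSn _) (gen m.+3 :: t)).
Qed.
End HH.

Lemma subst_phi_pos p : all (fun x : letter => ~~ x.2) p ->
  subst phi p = flatten [seq phi i | i <- map fst p].
Proof.
elim: p => //= [[k b] p IH] /andP[/= Hb Hp].
by rewrite subst_cons /= (negbTE Hb) IH.
Qed.

Theorem proposition5p2 (n : nat) : (1 <= n)%N ->
  [/\ (forall u v, word_on n u -> word_on n v ->
         pres_eq (H_rels n) u v -> pres_eq (braid_rels n) (subst phi u) (subst phi v)),
      (forall u v, word_on n u -> word_on n v ->
         pres_eq (braid_rels n) u v -> pres_eq (H_rels n) (subst psi u) (subst psi v)),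
      (forall u, word_on n u -> pres_eq (H_rels n) (subst psi (subst phi u)) u),
      (forall w, word_on n w -> pres_eq (braid_rels n) (subst phi (subst psi w)) w)
    & (forall w, word_on n w -> (in_image_H n w <-> in_Sigma n w))].
Proof.
move=> Hn; split.
- move=> u v _ _; apply: subst_pres => l r /mapP [[i j]].
  move=> /allpairsPdep [j' [i' [Hj Hi [-> ->]]]] [-> ->].
  rewrite mem_iota in Hj; rewrite mem_iota in Hi.
  apply: phi_rel; lia.
- move=> u v _ _; apply: subst_pres => l r; rewrite mem_cat => /orP [].
    move=> /mapP [i Hi [-> ->]]; rewrite mem_iota in Hi.
    rewrite /subst /= !cats0.
    have H := @BraidH n i [::]; rewrite !cats0 in H; apply: H; lia.
  move=> /mapP [[i j]]; rewrite mem_filter => /andP [/= Hc].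
  move=> /allpairsP [[i' j'] [/= Hi Hj [Ei Ej]]] [-> ->]; subst i' j'.
  rewrite mem_iota in Hi; rewrite mem_iota in Hj.
  rewrite /subst /= !cats0.
  case/orP: Hc => Hc.
    have H := @CS n i j [::]; rewrite !cats0 in H; symmetry; apply: H; lia.
  have H := @CS n j i [::]; rewrite !cats0 in H; apply: H; lia.
- move=> u Hu; rewrite subst_subst; apply: (subst_id (n := n)) => // k Hk t.
  case: k Hk => [//|k] Hk.
  by rewrite /phi subst_gen; apply: Tel.
- move=> w Hw; rewrite subst_subst; apply: (subst_id (n := n)) => // k Hk t.
  case: k Hk => [|[|m]] Hk //=; try reflexivity.
  have -> : psi m.+2 = [:: (m.+1,true); gen m.+2] by [].
  change (pres_eq (braid_rels n) ((inv_word (phi m.+1) ++ (phi m.+2 ++ [::])) ++ t) (gen m.+2 :: t)).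
  rewrite cats0.
  have -> : phi m.+2 = phi m.+1 ++ [:: gen m.+2].
    by rewrite /phi; have := iotaD 1 m.+1 1; rewrite addn1 add1n => ->; rewrite map_cat.
  rewrite -!catA cancel_w'; reflexivity.
- move=> w Hw; split.
    move=> [p [Hp Hpw]]; exists (map fst p); move: Hp => /andP [Hp Hneg]; split.
      by rewrite all_map; apply: sub_all Hp => x.
    by rewrite -subst_phi_pos.
  move=> [s [Hs Hsw]]; exists (map gen s); split.
    by rewrite /pos_word_on /word_on !all_map; apply/andP; split => //; apply/allP.
  by rewrite subst_gen.
Qed.
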